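(* Let $q$ be a prime power, $\beta$ a primitive element of $\mathbb{F}_{q^2}$, $\mathrm{Tr}(x)=x+x^q$, and $\Psi:\mathbb{F}_{q^2}^n\to\mathbb{F}_q^{2n}$, $\Psi(\alpha_0,\ldots,\alpha_{n-1})=\left(\mathrm{Tr}(\beta\alpha_0),\ldots,\mathrm{Tr}(\beta\alpha_{n-1}),\mathrm{Tr}(\beta^q\alpha_0),\ldots,\mathrm{Tr}(\beta^q\alpha_{n-1})\right)$. Let $g(x)=g_0+g_1x+\cdots+g_kx^k\in\mathbb{F}_q[x]$ be a monic divisor of $x^{2n}-1$ with $g(x)\neq x^{2n}-1$ (so $0\le k\le 2n-1$), let $\mathscr{D}=\langle g(x)\rangle$ be the $q$-ary linear cyclic code of length $2n$ generated by $g$, and let $\mathscr{C}=\Psi^{-1}(\mathscr{D})$ (an $\mathbb{F}_q$-linear additive conjucyclic code of length $n$ over $\mathbb{F}_{q^2}$). Set $V_{g(x)}=(g_0,g_1,\ldots,g_k,0,\ldots,0)\in\mathbb{F}_q^{2n}$ and $W_{g(x)}=\Psi^{-1}(V_{g(x)})\in\mathbb{F}_{q^2}^n$. Then the $2n-k$ vectors $W_{g(x)},T(W_{g(x)}),\ldots,T^{2n-k-1}(W_{g(x)})$ form an $\mathbb{F}_q$-basis of $\mathscr{C}$; i.e., the matrix with these rows is an additive generator matrix of $\mathscr{C}$.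
   Context: $T:\mathbb{F}_{q^2}^n\to\mathbb{F}_{q^2}^n$ is the conjucyclic shift $T(c_0,\ldots,c_{n-1})=(c_{n-1}^q,c_0,\ldots,c_{n-2})$. Identifying $\mathbb{F}_q^{2n}$ with $\mathbb{F}_q[x]/\langle x^{2n}-1\rangle$ via $(v_0,\ldots,v_{2n-1})\mapsto\sum v_ix^i$, $\langle g(x)\rangle$ is the ideal generated by $g$. *)

(* Defs.v *)
From HB Require Import structures.
From mathcomp Require Import all_boot all_order all_algebra all_field.
Set Implicit Arguments. Unset Strict Implicit. Unset Printing Implicit Defensive.
Import GRing.Theory.
Local Open Scope ring_scope.

(* F plays the role of F_q (q := #|F|), L : fieldExtType F with \dim L = 2
   plays the role of F_{q^2}; F embeds in L via c |-> c%:A. *)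

Section Defs.
Variables (F : finFieldType) (L : fieldExtType F) (n : nat).
Local Notation q := #|F|.

Definition trq (x : L) : L := x + x ^+ q.

(* Psi : F_{q^2}^n -> F_q^{2n}, valued in L (all values lie in F) *)
Definition Psi (beta : L) (a : {ffun 'I_n -> L}) : 'I_(n + n) -> L :=
  fun i => match split i with
           | inl j => trq (beta * a j)
           | inr j => trq (beta ^+ q * a j)
           end.

Definition conjshift (c : {ffun 'I_n -> L}) : {ffun 'I_n -> L} :=
  (* ord_pred i is i-1 for i > 0 and n-1 for i = 0 *)
  [ffun i : 'I_n => if (i == 0 :> nat) then c (ord_pred i) ^+ q
                    else c (ord_pred i)].

(* the q-ary cyclic code <g(x)> in F_q[x]/<x^{2n}-1>, vectors identified with
   polynomials of degree < 2n *)
Definition poly_of_vec (c : 'I_(n + n) -> F) : {poly F} :=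
  \sum_(i < n + n) c i *: 'X^i.

Definition in_cyclic_code (g : {poly F}) (c : 'I_(n + n) -> F) : Prop :=
  exists f : {poly F}, poly_of_vec c = (f * g) %% ('X^(n + n) - 1).

Definition Psi_is (beta : L) (a : {ffun 'I_n -> L}) (c : 'I_(n + n) -> F) :=
  forall i, Psi beta a i = (c i)%:A.

Definition in_conj_code (beta : L) (g : {poly F}) (a : {ffun 'I_n -> L}) : Prop :=
  exists2 c, in_cyclic_code g c & Psi_is beta a c.

Definition Vg (g : {poly F}) : 'I_(n + n) -> F := fun i => g`_i.

End Defs.

(* Main.v *)
Require Import Defs.
From HB Require Import structures.
From mathcomp Require Import all_boot all_order all_algebra all_field.
From mathcomp Require Import zify ring.
Set Implicit Arguments. Unset Strict Implicit. Unset Printing Implicit Defensive.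
Import GRing.Theory.
Local Open Scope ring_scope.

Section Frob.
Variables (F : finFieldType) (L : fieldExtType F).
Local Notation q := #|F|.

Lemma frobD (x y : L) : (x + y) ^+ q = x ^+ q + y ^+ q.
Proof.
have [p _ pcharFp] := finPcharP F; rewrite (card_pprimeChar pcharFp).
have pL : p \in [pchar L] by rewrite (pchar_lalg L).
elim: (logn _ _) x y => [|k IHk] x y; first by rewrite !expr1.
rewrite expnSr !exprM IHk.
by rewrite -!(pFrobenius_autE pL) rmorphD.
Qed.

Lemma frobF (c : F) : (c%:A : L) ^+ q = c%:A.
Proof. by rewrite -in_algE -rmorphXn expf_card. Qed.

Lemma frob_fix (x : L) : x ^+ q = x -> exists c : F, x = c%:A.
Proof.
move=> h; have := @Fermat's_little_theorem F L 1%AS x.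
rewrite dimv1 expn1 h eqxx => /vlineP[c ->]; exists c.
by rewrite -in_algE.
Qed.

Definition frob (x : L) := x ^+ q.

Fact frob_is_zmod : zmod_morphism frob.
Proof.
move=> x y; rewrite /frob.
have h := frobD (x - y) y; rewrite subrK in h.
by rewrite h addrK.
Qed.
HB.instance Definition _ := GRing.isZmodMorphism.Build L L frob frob_is_zmod.
Fact frob_is_monoid : monoid_morphism frob.
Proof. by rewrite /frob; split=> [|x y]; rewrite ?exprMn ?expr1n. Qed.
HB.instance Definition _ := GRing.isMonoidMorphism.Build L L frob frob_is_monoid.

Lemma frobE x : frob x = x ^+ q. Proof. by []. Qed.
Lemma frobDE x y : frob (x + y) = frob x + frob y. Proof. exact: rmorphD. Qed.
Lemma frobBE x y : frob (x - y) = frob x - frob y. Proof. exact: rmorphB. Qed.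
Lemma frobME x y : frob (x * y) = frob x * frob y. Proof. exact: rmorphM. Qed.
Lemma frobVE x : frob (x^-1) = (frob x)^-1. Proof. exact: fmorphV. Qed.
Lemma frobXE x k : frob (x ^+ k) = (frob x) ^+ k. Proof. exact: rmorphXn. Qed.
Lemma frobA (c : F) : frob c%:A = c%:A. Proof. exact: frobF. Qed.

Hypothesis dimL : \dim {:L} = 2%N.

Lemma frobK (x : L) : frob (frob x) = x.
Proof.
rewrite /frob -exprM mulnn; have := @Fermat's_little_theorem F L {:L}%AS x.
rewrite memvf dimL => h; apply/eqP; by rewrite -h.
Qed.

Lemma trqE (x : L) : trq x = x + frob x. Proof. by []. Qed.

Lemma trq_fix (x : L) : exists c : F, trq x = c%:A.
Proof. apply: frob_fix; rewrite trqE; change (frob (x + frob x) = x + frob x); by rewrite frobDE frobK addrC. Qed.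

Lemma q_gt1 : (1 < q)%N. Proof. exact: finNzRing_gt1. Qed.

Variable beta : L.
Hypothesis prim : (q ^ 2 - 1).-primitive_root beta.
Local Notation bq := (frob beta).

Lemma beta_frob2 : frob bq = beta. Proof. exact: frobK. Qed.

Lemma beta_neq0 : beta != 0.
Proof.
apply/negP => /eqP b0; have := prim_expr_order prim.
rewrite b0 expr0n; have := q_gt1.
case: (q ^ 2 - 1)%N (prim_order_gt0 prim) => // m _ _ /eqP.
by rewrite eq_sym oner_eq0.
Qed.

Lemma D_neq0 : beta ^+ 2 - bq ^+ 2 != 0.
Proof.
rewrite subr_eq0 frobE -exprM; apply/negP => /eqP h.
have h2 : beta ^+ (q * 2 - 2) == 1.
  have hb := beta_neq0.
  have : beta ^+ (q * 2 - 2) * beta ^+ 2 = beta ^+ 2.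
    by rewrite -exprD subnK ?h //; have := q_gt1; lia.
  move=> e; apply/eqP; apply: (mulIf (expf_neq0 2 hb)); by rewrite e mul1r.
rewrite -(prim_order_dvd prim) in h2.
have := dvdn_leq _ h2; have := q_gt1.
move: h2; set m := q; move=> h2 hm.
have : (0 < m * 2 - 2)%N by lia.
move=> hp /(_ hp).
have : (m * 2 - 2 < m ^ 2 - 1)%N.
  have : (m ^ 2 = m * m)%N by rewrite mulnn.
  move=> ->. nia.
lia.
Qed.


Lemma coord_inj x : trq (beta * x) = 0 -> trq (bq * x) = 0 -> x = 0.
Proof.
rewrite !trqE !frobME beta_frob2 => h1 h2.
have e : (beta ^+ 2 - bq ^+ 2) * x
          = beta * (beta * x + bq * frob x) - bq * (bq * x + beta * frob x).
  by ring.
move: e; rewrite h1 h2 !mulr0 subr0 => /eqP; rewrite mulf_eq0.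
by rewrite (negPf D_neq0) => /eqP.
Qed.

Definition solve (u v : F) : L :=
  (beta * u%:A - bq * v%:A) / (beta ^+ 2 - bq ^+ 2).

Lemma solve_frob u v :
  frob (solve u v) = (bq * u%:A - beta * v%:A) / (bq ^+ 2 - beta ^+ 2).
Proof.
by rewrite /solve !expr2 frobME frobVE !frobBE !frobME !frobA beta_frob2.
Qed.

Lemma solve1 u v : trq (beta * solve u v) = u%:A.
Proof.
rewrite trqE frobME solve_frob /solve.
have D := D_neq0; have D' : bq ^+ 2 - beta ^+ 2 != 0.
  by rewrite -opprB oppr_eq0.
move: D D'; set b := beta; set c := bq; move=> D D'.
field; apply/andP; split; assumption.
Qed.

Lemma solve2 u v : trq (bq * solve u v) = v%:A.
Proof.
rewrite trqE frobME solve_frob beta_frob2 /solve.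
have D := D_neq0; have D' : bq ^+ 2 - beta ^+ 2 != 0.
  by rewrite -opprB oppr_eq0.
move: D D'; set b := beta; set c := bq; move=> D D'.
field; apply/andP; split; assumption.
Qed.

Variable n : nat.

Lemma Psi_add (a b : {ffun 'I_n -> L}) i :
  Psi beta (a + b) i = Psi beta a i + Psi beta b i.
Proof.
rewrite /Psi; case: split => j; rewrite !ffunE mulrDr !trqE frobDE;
  by rewrite addrACA.
Qed.

Lemma trqZ (c : F) (x : L) : trq (c *: x) = c *: trq x.
Proof.
rewrite !trqE scalerDr; congr (_ + _).
by rewrite -[c *: x]mulr_algl -[c *: frob x]mulr_algl frobME frobA.
Qed.

Lemma Psi_scale (c : F) (a : {ffun 'I_n -> L}) i :
  Psi beta (c *: a) i = c *: Psi beta a i.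
Proof.
by rewrite /Psi; case: split => j; rewrite !ffunE -scalerAr trqZ.
Qed.

Lemma Psi0 i : Psi beta (0 : {ffun 'I_n -> L}) i = 0.
Proof.
by rewrite -(scale0r (0 : {ffun 'I_n -> L})) Psi_scale scale0r.
Qed.

Lemma Psi_sum m (c : 'I_m -> F) (v : 'I_m -> {ffun 'I_n -> L}) i :
  Psi beta (\sum_j c j *: v j) i = \sum_j c j *: Psi beta (v j) i.
Proof.
rewrite (big_morph (fun a => Psi beta a i) (fun a b => Psi_add a b i) (Psi0 i)).
by apply: eq_bigr => j _; rewrite Psi_scale.
Qed.

Lemma Psi_inj (a : {ffun 'I_n -> L}) : (forall i, Psi beta a i = 0) -> a = 0.
Proof.
move=> h; apply/ffunP => j; rewrite ffunE.
apply: coord_inj.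
  by have := h (lshift n j); rewrite /Psi (unsplitK (inl j)).
by have := h (rshift n j); rewrite /Psi (unsplitK (inr j)).
Qed.

Lemma Psi_surj (c : 'I_(n + n) -> F) : exists a, Psi_is beta a c.
Proof.
exists [ffun j => solve (c (lshift n j)) (c (rshift n j))] => i.
rewrite /Psi; case E: (split i) => [j|j]; rewrite ffunE.
  by rewrite solve1 -[i](splitK i) E.
by rewrite solve2 -[i](splitK i) E.
Qed.


Lemma trq_sh1 x : trq (beta * frob x) = trq (bq * x).
Proof. by rewrite !trqE !frobME !frobK addrC. Qed.
Lemma trq_sh2 x : trq (bq * frob x) = trq (beta * x).
Proof. by rewrite !trqE !frobME !frobK addrC. Qed.

Lemma ord_pred0 m (i : 'I_m) : i = 0 :> nat -> ord_pred i = (m - 1)%N :> nat.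
Proof.
move=> h /=; have hm := ltn_ord i; rewrite h add0n modn_small //; lia.
Qed.

Lemma ord_predS m (i : 'I_m) : i <> 0 :> nat -> ord_pred i = (i - 1)%N :> nat.
Proof.
move=> h /=; have hm := ltn_ord i.
have -> : (i + m).-1 = ((i - 1) + m)%N by lia.
rewrite modnDr modn_small //; lia.
Qed.

Lemma Psi_shift (a : {ffun 'I_n -> L}) i :
  Psi beta (conjshift a) i = Psi beta a (ord_pred i).
Proof.
rewrite /Psi /conjshift.
case: (splitP i) => j Hi; case: (splitP (ord_pred i)) => k Hk; rewrite ffunE;
  case: eqP => Hj; have := ltn_ord j; have := ltn_ord k; move=> hk hj;
  have Hi0 : i = 0 :> nat \/ i <> 0 :> nat by lia.
all: case: Hi0 => Hi0; [have Hp := ord_pred0 Hi0 | have Hp := ord_predS Hi0].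
all: try (have Hq := ord_pred0 Hj); try (have Hq := ord_predS Hj).
all: first [ by exfalso; lia
           | have E : ord_pred j = k by apply: ord_inj; lia ].
all: rewrite E -?frobE ?trq_sh1 ?trq_sh2 //.
Qed.


Lemma Psi_sub (a b : {ffun 'I_n -> L}) i :
  Psi beta (a - b) i = Psi beta a i - Psi beta b i.
Proof. by rewrite Psi_add -scaleN1r Psi_scale scaleN1r. Qed.

End Frob.

Section PolyH.
Variable F : finFieldType.

Lemma sumX_coef N (c : 'I_N -> F) (i : 'I_N) :
  (\sum_(j < N) c j *: 'X^j)`_i = c i.
Proof.
rewrite coef_sumMXn (big_pred1 i) // => j /=; exact: val_eqE.
Qed.

Lemma sumX_coefO N (c : 'I_N -> F) k :
  (N <= k)%N -> (\sum_(j < N) c j *: 'X^j)`_k = 0.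
Proof.
move=> hk; rewrite coef_sumMXn big_pred0 // => j /=.
apply/negP => /eqP e; have := ltn_ord j; lia.
Qed.

Lemma sumX_size N (c : 'I_N -> F) : leq (size (\sum_(j < N) c j *: 'X^j)%R) N.
Proof. by apply/leq_sizeP => k hk; exact: sumX_coefO. Qed.

Lemma sumX_id N (p : {poly F}) :
  (size p <= N)%N -> \sum_(j < N) p`_j *: 'X^j = p.
Proof.
move=> hs; rewrite -poly_def; apply/polyP => k; rewrite coef_poly.
case: ltnP => // h; rewrite nth_default //; exact: leq_trans hs h.
Qed.
End PolyH.


Unset Implicit Arguments.

Lemma A2 (x s h m N : nat) : h = ((x + s).-1)%N -> (h <= N)%N ->
  m = (N - s.-1)%N -> (0 < s)%N -> (x <= m)%N.
Proof. lia. Qed.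

Ltac slia p := let t := fresh "t" in set t := size p; intros; lia.

Theorem theorem4p3 (F : finFieldType) (L : fieldExtType F) (n : nat)
  (beta : L) (g : {poly F}) :
  \dim {: L} = 2%N ->
  (#|F| ^ 2 - 1).-primitive_root beta ->
  (0 < n)%N ->
  g \is monic ->
  g %| ('X^(n + n) - 1) ->
  g != 'X^(n + n) - 1 ->
  (exists W : {ffun 'I_n -> L}, Psi_is beta W (@Vg F n g)) /\
  (forall W : {ffun 'I_n -> L}, Psi_is beta W (@Vg F n g) ->
     let B := mkseq (fun j => iter j (@conjshift F L n) W) (n + n - (size g).-1) in
     free B /\ (forall a : {ffun 'I_n -> L}, in_conj_code beta g a <-> a \in <<B>>%VS)).
Proof.
move=> dimL prim n0 mon gdvd gne.
have g0 : g != 0 := monic_neq0 mon.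
have sg : (0 < size g)%N by rewrite size_poly_gt0.
have n2 : (0 < n + n)%N by lia.
have hs : (size g).-1 = (size g - 1)%N by rewrite subn1.
have sX : size ('X^(n + n) - 1 : {poly F}) = (n + n).+1 := size_Xn_sub_1 _ n2.
have Xne0 : ('X^(n + n) - 1 : {poly F}) != 0 by rewrite -size_poly_gt0 sX.
have sg2 : (size g <= n + n)%N.
  have := dvdp_leq Xne0 gdvd; rewrite sX leq_eqVlt ltnS => /orP[/eqP e|//].
  exfalso; move/negP: gne; apply.
  rewrite -(eqp_monic mon (monic_Xn_sub_1 _ n2)) -dvdp_size_eqp // sX e //.
split; first exact: (Psi_surj dimL prim).
move=> W hW B.
set m := (n + n - (size g).-1)%N.
have mE : m = (n + n - (size g).-1)%N by [].
have sB : size B = m by rewrite size_mkseq.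
have BE : forall j, (j < m)%N -> B`_j = iter j (@conjshift F L n) W.
  by move=> j hj; rewrite nth_mkseq.
have KW : forall j, (j < m)%N -> forall i,
    Psi beta (iter j (@conjshift F L n) W) i = (('X^j * g)`_i)%:A.
  elim => [|j IH] hj i.
    by rewrite /= expr0 mul1r hW.
  rewrite iterS (Psi_shift dimL prim) IH; last by lia.
  rewrite exprS -mulrA coefXM.
  case: eqP => hi.
    rewrite (ord_pred0 dimL prim hi) coefXnM.
    case: ltnP => h //; rewrite nth_default //; move: (hj) (sg) (sg2) (hs) (mE) (h); slia g.
  by rewrite (ord_predS dimL prim hi) subn1.
have Psi_comb : forall (c : 'I_(size B) -> F) i,
    Psi beta (\sum_j c j *: B`_j) i
    = (((\sum_(j < size B) c j *: 'X^j) * g)`_i)%:A.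
  move=> c i; rewrite Psi_sum.
  rewrite (eq_bigr (fun j => c j *: (('X^j * g)`_i)%:A)); last first.
    by move=> j _; rewrite BE ?KW // -sB.
  rewrite mulr_suml coef_sum scaler_suml; apply: eq_bigr => j _.
  by rewrite -scalerAl coefZ scalerA.
have size_ug : forall c : 'I_(size B) -> F,
    leq (size ((\sum_(j < size B) c j *: 'X^j) * g)%R) (n + n).
  move=> c; apply: leq_trans (size_polyMleq _ _) _.
  have := sumX_size c; move: (sB) (mE) (hs) (sg) (sg2); slia g.
split.
  suff : free (in_tuple B) by []. apply/freeP => c hc i.
  set u := \sum_(j < size B) c j *: 'X^j.
  have ug0 : u * g = 0.
    apply/polyP => k; rewrite coef0; case: (ltnP k (n + n)) => hk.
      have := Psi_comb c (Ordinal hk).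
      have -> : \sum_j c j *: B`_j = 0 by exact: hc.
      rewrite Psi0 => /esym/eqP; rewrite scaler_eq0 oner_eq0 orbF => /eqP.
      done.
    rewrite nth_default //; exact: leq_trans (size_ug c) hk.
  have u0 : u = 0 by move/eqP: ug0; rewrite mulf_eq0 (negPf g0) orbF => /eqP.
  by have := sumX_coef c i; rewrite -/u u0 coef0.
move=> a; split.
  case=> c [f hf] hPsi.
  set h := poly_of_vec c in hf.
  have gh : g %| h by rewrite hf -(dvdp_mod _ gdvd) dvdp_mull ?dvdpp.
  have sh : (size h <= n + n)%N.
    by rewrite hf; have := ltn_modpN0 (f * g) Xne0; rewrite sX.
  case/dvdpP: gh => u hu.
  have su : (size u <= size B)%N.
    rewrite sB; case: (eqVneq u 0) => [->|u0]; first by rewrite size_poly0.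
    have e := size_mul u0 g0; rewrite -hu in e; exact: (@A2 _ _ _ _ _ e sh mE sg).
  have -> : a = \sum_(j < size B) u`_j *: B`_j.
    apply/eqP; rewrite -subr_eq0; apply/eqP; apply: (Psi_inj dimL prim) => i.
    rewrite Psi_sub hPsi Psi_comb sumX_id // -hu.
    by rewrite /h /poly_of_vec sumX_coef subrr.
  apply: rpred_sum => j _; apply: rpredZ; apply: memv_span; apply: mem_nth.
  exact: ltn_ord.
move=> ha.
have ea := @coord_span _ _ _ (in_tuple B) a ha.
set u := \sum_(j < size B) coord (in_tuple B) j a *: 'X^j.
exists (fun i => (u * g)`_i).
  exists u; rewrite modp_small; last by rewrite sX ltnS size_ug.
  by rewrite /poly_of_vec sumX_id // size_ug.
by move=> i; rewrite {1}ea Psi_comb.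
Qed.
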